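(* Let $q$ be a prime power. Let $C_1=[n,k_1,d_1]_q$, $C_2=[n,k_2,d_2]_q$ be linear codes over $\mathbb{F}_q$ with $C_2\subset C_1$ (giving via CSS an asymmetric stabilizer code $[[n,k^{*},d_z^{*}/d_x^{*}]]_q$, $k^{*}=k_1-k_2$, $d_z^{*}\geq d_1$, $d_x^{*}\geq d_2^{\perp}$), and let $C_3=[n,k_3,d_3]_q$, $C_4=[n,k_4,d_4]_q$ be linear codes over $\mathbb{F}_q$ with $C_4\subset C_3$ (giving an asymmetric stabilizer code $[[n,k^{\diamond},d_z^{\diamond}/d_x^{\diamond}]]_q$, $k^{\diamond}=k_3-k_4$, $d_z^{\diamond}\geq d_3$, $d_x^{\diamond}\geq d_4^{\perp}$), where $d_2^{\perp}$ and $d_4^{\perp}$ are the minimum distances of the Euclidean duals $C_2^{\perp}$ and $C_4^{\perp}$. Then there exists an AQECC $[[2n,k^{*}+k^{\diamond},d_z/d_x]]_q$ with $d_z\geq\min\{2d_1,d_3\}$ and $d_x\geq\min\{2d_4^{\perp},d_2^{\perp}\}$.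
   Context: An AQECC $[[n,k,d_z/d_x]]_q$ is a $q^k$-dimensional subspace of $\mathbb{C}^{q^n}$ correcting all qudit-flip errors up to $\lfloor (d_x-1)/2\rfloor$ and all phase-shift errors up to $\lfloor (d_z-1)/2\rfloor$. CSS construction: if $C_2\subset C_1\subseteq\mathbb{F}_q^n$ are linear of dimensions $k_2<k_1$, there is an AQECC $[[n,k_1-k_2,d_z/d_x]]_q$ with $d_z=\mathrm{wt}(C_1\setminus C_2)$, $d_x=\mathrm{wt}(C_2^{\perp}\setminus C_1^{\perp})$. *)

(* Defs.v *)
From HB Require Import structures.
From mathcomp Require Import all_boot all_order all_algebra all_field.
Set Implicit Arguments. Unset Strict Implicit. Unset Printing Implicit Defensive.
Import Order.TTheory GRing.Theory Num.Theory.
Local Open Scope ring_scope.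

Section ClassicalCodes.
Variable F : finFieldType.

Definition wt (n : nat) (v : 'rV[F]_n) : nat := #|[set i : 'I_n | v 0 i != 0]|.

(* minimum weight of the nonzero words of a set of words (n.+1 if there are none) *)
Definition min_wt (n : nat) (P : pred 'rV[F]_n) : nat :=
  \big[minn/n.+1]_(c : 'rV[F]_n | P c && (c != 0)) wt c.

Definition mindist (n : nat) (C : {vspace 'rV[F]_n}) : nat :=
  min_wt (fun c => c \in C).

Definition dual_code (n : nat) (C : {vspace 'rV[F]_n}) : pred 'rV[F]_n :=
  fun u => [forall c : 'rV[F]_n, (c \in C) ==> (u *m c^T == 0)].

Definition dual_mindist (n : nat) (C : {vspace 'rV[F]_n}) : nat :=
  min_wt (dual_code C).

End ClassicalCodes.

Section QuantumCodes.
Variable F : finFieldType.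

(* a nontrivial additive character of F (e.g. x |-> omega^(tr x)) *)
Definition nontriv_add_char (chi : F -> algC) : Prop :=
  chi 0 = 1 /\ (forall x y, chi (x + y) = chi x * chi y) /\ exists x, chi x != 1.

(* the Hilbert space C^{q^m}: functions on the computational basis F^m *)
Definition qstate (m : nat) := {ffun 'rV[F]_m -> algC^o}.

Definition qinner (m : nat) (u v : qstate m) : algC :=
  \sum_(x : 'rV[F]_m) (u x)^* * v x.

(* the error operator X(a) Z(b):  Z(b)|x> = chi(b.x)|x>,  X(a)|x> = |x+a> *)
Definition pauliXZ (chi : F -> algC) (m : nat) (a b : 'rV[F]_m) (u : qstate m)
  : qstate m :=
  [ffun x : 'rV[F]_m => chi ((b *m (x - a)^T) 0 0) * u (x - a)].

(* Q corrects every error X(a)Z(b) with wt a <= tx (qudit flips) and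
   wt b <= tz (phase shifts): Knill-Laflamme conditions *)
Definition corrects (chi : F -> algC) (m tz tx : nat) (Q : {vspace qstate m}) :=
  forall a1 b1 a2 b2 : 'rV[F]_m,
    (wt a1 <= tx)%N -> (wt b1 <= tz)%N -> (wt a2 <= tx)%N -> (wt b2 <= tz)%N ->
    exists c : algC, forall u v, u \in Q -> v \in Q ->
      qinner (pauliXZ chi a1 b1 u) (pauliXZ chi a2 b2 v) = c * qinner u v.

Definition is_AQECC (chi : F -> algC) (m K dz dx : nat) (Q : {vspace qstate m}) :=
  \dim Q = (#|F| ^ K)%N /\ corrects chi (dz.-1)./2 (dx.-1)./2 Q.

End QuantumCodes.

(* Main.v *)
Require Import Defs.
From HB Require Import structures.
From mathcomp Require Import all_boot all_order all_algebra all_field.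
From mathcomp Require Import ring zify.
Set Implicit Arguments. Unset Strict Implicit. Unset Printing Implicit Defensive.
Import Order.TTheory GRing.Theory Num.Theory.
Local Open Scope ring_scope.

Section Dot.
Variable F : finFieldType.

Definition dot m (x y : 'rV[F]_m) : F := \sum_i x 0 i * y 0 i.

Lemma dotE m (x y : 'rV[F]_m) : (x *m y^T) 0 0 = dot x y.
Proof. by rewrite mxE; apply: eq_bigr => i _; rewrite mxE. Qed.

Lemma dotC m (x y : 'rV[F]_m) : dot x y = dot y x.
Proof. by apply: eq_bigr => i _; rewrite mulrC. Qed.

Lemma dotDl m (x y z : 'rV[F]_m) : dot (x + y) z = dot x z + dot y z.
Proof. by rewrite /dot -big_split; apply: eq_bigr => i _; rewrite mxE mulrDl. Qed.

Lemma dotZl m k (x z : 'rV[F]_m) : dot (k *: x) z = k * dot x z.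
Proof. by rewrite /dot mulr_sumr; apply: eq_bigr => i _; rewrite mxE mulrA. Qed.

Lemma dotNl m (x z : 'rV[F]_m) : dot (- x) z = - dot x z.
Proof. by rewrite -scaleN1r dotZl mulN1r. Qed.

Lemma dotBl m (x y z : 'rV[F]_m) : dot (x - y) z = dot x z - dot y z.
Proof. by rewrite dotDl dotNl. Qed.

Lemma dotDr m (x y z : 'rV[F]_m) : dot z (x + y) = dot z x + dot z y.
Proof. by rewrite dotC dotDl !(dotC z). Qed.

Lemma dotNr m (x z : 'rV[F]_m) : dot z (- x) = - dot z x.
Proof. by rewrite dotC dotNl dotC. Qed.

Lemma dotBr m (x y z : 'rV[F]_m) : dot z (x - y) = dot z x - dot z y.
Proof. by rewrite dotDr dotNr. Qed.

Lemma dotZr m k (x z : 'rV[F]_m) : dot z (k *: x) = k * dot z x.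
Proof. by rewrite dotC dotZl dotC. Qed.

Lemma dot0l m (z : 'rV[F]_m) : dot 0 z = 0.
Proof. by rewrite -(scale0r 0) dotZl mul0r. Qed.

Lemma dot0r m (z : 'rV[F]_m) : dot z 0 = 0.
Proof. by rewrite dotC dot0l. Qed.

Lemma mx11_eq0 (M : 'M[F]_1) : (M == 0) = (M 0 0 == 0).
Proof.
apply/eqP/eqP => [->|h]; first by rewrite mxE.
by apply/matrixP => i j; rewrite !ord1 h mxE.
Qed.

Definition lin m (S : pred 'rV[F]_m) :=
  [/\ S 0, (forall x y, S x -> S y -> S (x + y)) & (forall k x, S x -> S (k *: x))].

Definition perp m (S : pred 'rV[F]_m) : pred 'rV[F]_m :=
  [pred w | [forall c, S c ==> (dot w c == 0)]].

Lemma perpP m (S : pred 'rV[F]_m) w :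
  reflect (forall c, S c -> dot w c = 0) (perp S w).
Proof.
apply: (iffP forallP) => [h c Sc|h c]; first by apply/eqP; move: (h c); rewrite Sc.
by apply/implyP => /h ->.
Qed.

Lemma lin_perp m (S : pred 'rV[F]_m) : lin (perp S).
Proof.
split.
- by apply/perpP => c _; rewrite dot0l.
- by move=> x y /perpP hx /perpP hy; apply/perpP => c Sc; rewrite dotDl hx ?hy ?addr0.
- by move=> k x /perpP hx; apply/perpP => c Sc; rewrite dotZl hx ?mulr0.
Qed.

Lemma lin_vspace m (V : {vspace 'rV[F]_m}) : lin (fun x => x \in V).
Proof.
split; first exact: mem0v.
- by move=> x y; apply: memvD.
- by move=> k x; apply: memvZ.
Qed.

Lemma linN m (S : pred 'rV[F]_m) x : lin S -> S x -> S (- x).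
Proof. by case=> _ _ hZ Sx; rewrite -scaleN1r hZ. Qed.

Lemma linB m (S : pred 'rV[F]_m) x y : lin S -> S x -> S y -> S (x - y).
Proof. by move=> hS Sx Sy; have [_ hD _] := hS; rewrite hD // linN. Qed.

End Dot.


Section Chars.
Variable F : finFieldType.
Variable chi : F -> algC.
Hypothesis hchi : nontriv_add_char chi.

Lemma chi0 : chi 0 = 1. Proof. by case: hchi. Qed.
Lemma chiD x y : chi (x + y) = chi x * chi y. Proof. by case: hchi => _ []. Qed.
Lemma chiNr x : chi x * chi (- x) = 1. Proof. by rewrite -chiD subrr chi0. Qed.
Lemma chi_neq0 x : chi x != 0.
Proof. by apply/negP => /eqP h; move: (chiNr x); rewrite h mul0r => /eqP; rewrite eq_sym oner_eq0. Qed.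
Lemma chiN x : chi (- x) = (chi x)^-1.
Proof. by apply: (mulfI (chi_neq0 x)); rewrite chiNr mulfV ?chi_neq0. Qed.
Lemma chiMn x k : chi (x *+ k) = chi x ^+ k.
Proof. by elim: k => [|k IH]; rewrite ?mulr0n ?chi0 ?expr0 // mulrS chiD IH exprS. Qed.

Lemma chi_conj x : (chi x)^* = chi (- x).
Proof.
have [p pr_p chp] := finPcharP F.
have h1 : chi x ^+ p = 1 by rewrite -chiMn (mulrn_pchar chp) chi0.
have hn : `|chi x| = 1.
  apply/eqP; rewrite -(pexpr_eq1 (prime_gt0 pr_p)) ?normr_ge0 //.
  by rewrite -normrX h1 normr1.
rewrite chiN invC_norm hn expr1n invr1 mul1r //.
Qed.

Lemma chi_nontriv : exists x, chi x != 1. Proof. by case: hchi => _ []. Qed.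

Lemma char_sum m (S : pred 'rV[F]_m) w : lin S ->
  \sum_(y | S y) chi (dot w y) = if perp S w then (#|S|%:R : algC) else 0.
Proof.
move=> hS; case: ifP => [/perpP hw | /perpP hw].
  rewrite (eq_bigr (fun _ => 1)); last by move=> y Sy; rewrite hw // chi0.
  by rewrite sumr_const.
have [c0 Sc0 hc0] : exists2 c0, S c0 & dot w c0 != 0.
  case: (boolP [exists c, S c && (dot w c != 0)]) => [/existsP [c /andP[]] | hn].
    by exists c.
  exfalso; apply: hw => c Sc; apply/eqP.
  by move: hn; rewrite negb_exists => /forallP/(_ c); rewrite negb_and Sc /= negbK.
have [x0 hx0] := chi_nontriv.
pose y1 := (x0 / dot w c0) *: c0.
have Sy1 : S y1 by have [_ _ hZ] := hS; apply: hZ.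
have dy1 : dot w y1 = x0 by rewrite dotZr mulfVK.
set s := (X in X = _).
have : s = chi x0 * s.
  rewrite {1}/s (reindex_inj (addIr y1)) /= mulr_sumr.
  apply: eq_big => [j|j _]; last by rewrite dotDr chiD dy1 mulrC.
  apply/idP/idP => Sj; last by have [_ hD _] := hS; apply: hD.
  by rewrite -(addrK y1 j); apply: (linB hS).
move=> hs; have : (1 - chi x0) * s = 0 by rewrite mulrBl mul1r -hs subrr.
by move/eqP; rewrite mulf_eq0 subr_eq0 eq_sym (negbTE hx0) /= => /eqP.
Qed.

Lemma perpT0 m (c : 'rV[F]_m) : perp predT c -> c = 0.
Proof.
move/perpP => h; apply/rowP => j; have := h (\row_k ((k == j)%:R)) isT.
rewrite /dot (bigD1 j) //= mxE eqxx mulr1 big1 ?addr0 ?mxE // => k /negbTE hk.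
by rewrite mxE hk mulr0.
Qed.

Lemma lin_predT m : lin (@predT 'rV[F]_m). Proof. by []. Qed.

Lemma card_perp m (S : pred 'rV[F]_m) : lin S ->
  (#|S| * #|perp S|)%N = (#|F| ^ m)%N.
Proof.
move=> hS.
have E : \sum_(u : 'rV[F]_m) \sum_(c | S c) chi (dot u c) = (#|perp S| * #|S|)%:R.
  rewrite (eq_bigr (fun u => if perp S u then #|S|%:R else 0)) => [|u _]; last exact: char_sum.
  by rewrite -big_mkcond sumr_const natrM mulrC mulr_natr.
have E2 : \sum_(u : 'rV[F]_m) \sum_(c | S c) chi (dot u c) = (#|F| ^ m)%:R.
  rewrite exchange_big /=.
  rewrite (eq_bigr (fun c => if c == 0 then (#|F| ^ m)%:R else 0)) => [|c Sc].
    rewrite -big_mkcondr (big_pred1 0) // => c /=.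
    by case: eqP => [->|]; rewrite ?andbF ?andbT //; have [] := hS.
  rewrite (eq_bigr (fun u => chi (dot c u))) => [|u _]; last by rewrite dotC.
  have := char_sum c (lin_predT m) => /= ->.
  case: ifP => [/perpT0 ->|]; first by rewrite eqxx -[in RHS](mul1n m) -(card_mx F 1 m).
  case: eqP => // ->; have [] := lin_perp (@predT 'rV[F]_m); by move=> ->.
by apply/eqP; rewrite mulnC -(eqr_nat algC) -E -E2.
Qed.

Lemma perpK m (S : pred 'rV[F]_m) : lin S -> perp (perp S) =1 S.
Proof.
move=> hS.
have sub c : S c -> perp (perp S) c.
  by move=> Sc; apply/perpP => w /perpP hw; rewrite dotC hw.
have hc : #|S| = #|perp (perp S)|.
  have h1 := card_perp hS; have h2 := card_perp (lin_perp S).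
  have p0 : (0 < #|perp S|)%N.
    by apply/card_gt0P; exists 0; have [] := lin_perp S.
  by apply/eqP; rewrite -(eqn_pmul2l p0) h2 mulnC h1.
have hsub : S \subset perp (perp S) by apply/subsetP => c; apply: sub.
move=> c; have := subset_cardP hc hsub => /(_ c).
by move=> h; symmetry; exact: h.
Qed.
End Chars.


Section Wt.
Variable F : finFieldType.

Lemma wt_eq0 m (x : 'rV[F]_m) : wt x = 0%N -> x = 0.
Proof.
move/eqP; rewrite /wt cards_eq0 => /eqP h; apply/rowP => j; rewrite mxE.
case: (eqVneq (x 0 j) 0) => // hj.
have : j \in [set i | x 0 i != 0] by rewrite inE.
by rewrite h inE.
Qed.

Lemma wt0 m : wt (0 : 'rV[F]_m) = 0%N.
Proof. by apply/eqP; rewrite /wt cards_eq0; apply/eqP/setP => i; rewrite !inE mxE eqxx. Qed.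

Lemma wt_sub m (x y : 'rV[F]_m) : (wt (x - y) <= wt x + wt y)%N.
Proof.
rewrite /wt; apply: leq_trans (leq_card_setU _ _); apply: subset_leq_card.
apply/subsetP => i; rewrite !inE !mxE.
by case: (eqVneq (x 0 i) 0) => [->|] //; case: (eqVneq (y 0 i) 0) => [->|] //; rewrite subrr eqxx.
Qed.

Lemma small_eq0 m (x : 'rV[F]_m) d : (wt x <= d.-1)%N -> (d <= wt x)%N -> x = 0.
Proof.
move=> h1 h2; apply: wt_eq0; case: d h1 h2 => [|d] /= h1 h2; first by apply/eqP; rewrite -leqn0.
by move: (leq_trans h2 h1); rewrite ltnn.
Qed.

Lemma half_le (d : nat) (w1 w2 : nat) : (w1 <= (d.-1)./2)%N -> (w2 <= (d.-1)./2)%N ->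
  (w1 + w2 <= d.-1)%N.
Proof.
move=> h1 h2; apply: leq_trans (leq_add h1 h2) _.
by rewrite addnn -{2}(odd_double_half d.-1) leq_addl.
Qed.

End Wt.


Section CSS.
Variable F : finFieldType.
Variable chi : F -> algC.
Hypothesis hchi : nontriv_add_char chi.
Variable m : nat.
Variables G1 G2 : {vspace 'rV[F]_m}.

Let D : pred 'rV[F]_m := perp (fun x => x \in G2).
Let linD : lin D := lin_perp _.

Definition phi (c : 'rV[F]_m) : qstate F m :=
  [ffun x => if D x then chi (dot x c) else 0].

Lemma KL_phi a1 b1 a2 b2 c c' :
  qinner (pauliXZ chi a1 b1 (phi c)) (pauliXZ chi a2 b2 (phi c')) =
  if D (a2 - a1) then chi (- dot (a2 - a1) (b2 + c')) *
     (if perp D ((b2 - b1) + (c' - c)) then (#|D|%:R : algC) else 0) else 0.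
Proof.
rewrite /qinner (reindex_inj (addIr a1)) /=.
set a := a2 - a1.
case: ifP => Da.
  rewrite -(char_sum hchi _ linD) mulr_sumr [RHS]big_mkcond /=.

  apply: eq_bigr => y _; rewrite !ffunE !dotE addrK.
  have -> : y + a1 - a2 = y - a by rewrite /a opprB addrA addrAC.
  have -> : D (y - a) = D y.
    apply/idP/idP => h; last exact: linB.
    by rewrite -(subrK a y); have [_ hD _] := linD; apply: hD.
  case: ifP => Dy; last by rewrite !mulr0.

  rewrite !rmorphM /= !chi_conj // -!chiD //; congr chi.
  rewrite ?dotBr ?dotDr ?dotBl ?dotDl ?dotNr ?dotNl.
  rewrite (dotC y c) (dotC y c') (dotC b2 a2) (dotC b2 a1); ring.
rewrite big1 // => y _; rewrite !ffunE.
case: (boolP (D (y + a1 - a1))) => Dy; last by rewrite mulr0 conjC0 mul0r.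
case: (boolP (D (y + a1 - a2))) => Dy2; last by rewrite !mulr0.
exfalso; move/negP: Da; apply.
have -> : a = (y + a1 - a1) - (y + a1 - a2) by apply/rowP => j; rewrite !mxE; ring.
exact: linB.
Qed.


Lemma pauliXZ00 (u : qstate F m) : pauliXZ chi 0 0 u = u.
Proof.
apply/ffunP => x; rewrite !ffunE subr0 dotE dot0l (chi0 hchi) mul1r //.
Qed.

Lemma perpD x : perp D x = (x \in G2).
Proof. exact: (perpK hchi (lin_vspace G2)). Qed.

Lemma inner_phi c c' :
  qinner (phi c) (phi c') = if perp D (c' - c) then (#|D|%:R : algC) else 0.
Proof.
have := KL_phi 0 0 0 0 c c'; rewrite !pauliXZ00 => ->.
have D0 : D (0 - 0) by rewrite subr0; have [] := linD.
by rewrite D0 subr0 dot0l oppr0 (chi0 hchi) mul1r add0r.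
Qed.

Hypothesis sG : (G2 <= G1)%VS.
Let L := (G1 :\: G2)%VS.

Lemma L_sub c : c \in L -> c \in G1.
Proof. by move/(subvP (diffvSl G1 G2)). Qed.

Lemma L_eq c c' : c \in L -> c' \in L -> (c' - c \in G2) = (c == c').
Proof.
move=> hc hc'.
have hL : c' - c \in L by apply: memvB.
apply/idP/idP => [h|/eqP ->]; last by rewrite subrr mem0v.
have : c' - c \in (L :&: G2)%VS by rewrite memv_cap hL h.
by rewrite capv_diff memv0 subr_eq0 eq_sym.
Qed.

Lemma basis_KL a1 b1 a2 b2 c c' :
  (D (a2 - a1) -> perp (fun x => x \in G1) (a2 - a1)) ->
  (b2 - b1 \in G1 -> b2 - b1 = 0) ->
  c \in L -> c' \in L ->
  qinner (pauliXZ chi a1 b1 (phi c)) (pauliXZ chi a2 b2 (phi c')) =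
  (if D (a2 - a1) && (b2 - b1 == 0) then chi (- dot (a2 - a1) b2) else 0)
    * qinner (phi c) (phi c').
Proof.
move=> ha hb hc hc'; rewrite KL_phi inner_phi.
case: (boolP (D (a2 - a1))) => Da /=; last by rewrite mul0r.
have /perpP pa := ha Da.
rewrite dotDr (pa c') ?L_sub // addr0 !perpD.
case: (boolP (b2 - b1 == 0)) => [/eqP -> | hb0]; first by rewrite add0r.
rewrite mul0r; case: ifP => h; last by rewrite mulr0.
exfalso; move/negP: hb0; apply; apply/eqP; apply: hb.
have -> : b2 - b1 = (b2 - b1 + (c' - c)) - (c' - c) by rewrite addrK.
apply: memvB; first exact: (subvP sG).
by apply: memvB; apply: L_sub.
Qed.


Lemma qinner_suml n (k : 'I_n -> algC) (f : 'I_n -> qstate F m) v :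
  qinner (\sum_i k i *: f i) v = \sum_i (k i)^* * qinner (f i) v.
Proof.
rewrite /qinner.
under eq_bigr => x _ do rewrite sum_ffunE rmorph_sum mulr_suml.
rewrite exchange_big /=; apply: eq_bigr => i _; rewrite mulr_sumr.
by apply: eq_bigr => x _; rewrite ffunE rmorphM mulrA.
Qed.

Lemma qinner_sumr n (k : 'I_n -> algC) (f : 'I_n -> qstate F m) u :
  qinner u (\sum_i k i *: f i) = \sum_i k i * qinner u (f i).
Proof.
rewrite /qinner.
under eq_bigr => x _ do rewrite sum_ffunE mulr_sumr.
rewrite exchange_big /=; apply: eq_bigr => i _; rewrite mulr_sumr.
by apply: eq_bigr => x _; rewrite ffunE mulrCA.
Qed.

Lemma pauliXZ_sum a b n (k : 'I_n -> algC) (f : 'I_n -> qstate F m) :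
  pauliXZ chi a b (\sum_i k i *: f i) = \sum_i k i *: pauliXZ chi a b (f i).
Proof.
apply/ffunP => x; rewrite !ffunE !sum_ffunE mulr_sumr.
by apply: eq_bigr => i _; rewrite !ffunE mulrCA.
Qed.


Definition sQ := [seq phi c | c <- enum L].

Lemma sQ_nth i : (i < size sQ)%N ->
  sQ`_i = phi (nth 0 (enum L) i) /\ nth 0 (enum L) i \in L.
Proof.
rewrite size_map => hi; split; first by rewrite (nth_map 0).
by have := mem_nth 0 hi; rewrite mem_enum.
Qed.

Lemma cardD_neq0 : (#|D|%:R : algC) != 0.
Proof.
rewrite pnatr_eq0 -lt0n; apply/card_gt0P; exists 0.
by have [] := linD.
Qed.

Lemma dim_Q : \dim <<sQ>> = #|L|.
Proof.
have fr : free sQ.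
  apply/(@freeP _ _ (size sQ) (in_tuple sQ)) => k hk i.
  have := congr1 (qinner sQ`_i) hk.
  rewrite qinner_sumr (bigD1 i) //= big1 ?addr0.
    have [-> hi] := sQ_nth (ltn_ord i).
    rewrite inner_phi subrr.
    have -> : perp D 0 by have [] := lin_perp D.
    have -> : qinner (phi (nth 0 (enum L) i)) 0 = 0.
      by rewrite /qinner big1 // => x _; rewrite [X in _ * X]ffunE; exact: mulr0.
    by move/eqP; rewrite mulf_eq0 (negbTE cardD_neq0) orbF => /eqP.
  move=> j hj; have [-> hi] := sQ_nth (ltn_ord i); have [-> hj'] := sQ_nth (ltn_ord j).
  rewrite inner_phi perpD L_eq // nth_uniq ?enum_uniq //; last by rewrite -(size_map phi).
    by rewrite ifN ?mulr0 // eq_sym; exact: hj.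
  by rewrite -(size_map phi).
by move: fr; rewrite /free => /eqP ->; rewrite size_map cardE.
Qed.

Variables dz dx : nat.
Hypothesis HZ : forall b, b \in G1 -> b != 0 -> (dz <= wt b)%N.
Hypothesis HX : forall a, D a -> ~~ perp (fun x => x \in G1) a -> (dx <= wt a)%N.

Lemma css_corrects : corrects chi ((dz.-1)./2) ((dx.-1)./2) <<sQ>>%VS.
Proof.
move=> a1 b1 a2 b2 ha1 hb1 ha2 hb2.
have wa : (wt (a2 - a1) <= dx.-1)%N := leq_trans (wt_sub _ _) (half_le ha2 ha1).
have wb : (wt (b2 - b1) <= dz.-1)%N := leq_trans (wt_sub _ _) (half_le hb2 hb1).
have ha : D (a2 - a1) -> perp (fun x => x \in G1) (a2 - a1).
  move=> Da; apply/negPn/negP => hn.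
  have e := small_eq0 wa (HX Da hn).
  by move: hn; rewrite e; have [-> _ _] := lin_perp (fun x => x \in G1).
have hb : b2 - b1 \in G1 -> b2 - b1 = 0.
  move=> hG; case: (eqVneq (b2 - b1) 0) => // hn; exact: small_eq0 wb (HZ hG hn).
eexists => u v hu hv.
have hu' : u \in span (in_tuple sQ) := hu.
have hv' : v \in span (in_tuple sQ) := hv.
rewrite (coord_span hu') (coord_span hv') !pauliXZ_sum qinner_suml [in RHS]qinner_suml mulr_sumr.
apply: eq_bigr => i _; rewrite !qinner_sumr mulrCA; congr (_ * _).
rewrite mulr_sumr; apply: eq_bigr => j _; rewrite mulrCA; congr (_ * _).
have [-> hi] := sQ_nth (ltn_ord i); have [-> hj] := sQ_nth (ltn_ord j).
exact: basis_KL.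
Qed.

End CSS.


Lemma bigmin_le (T : eqType) (r : seq T) (P : pred T) (f : T -> nat) x c :
  c \in r -> P c -> (\big[minn/x]_(i <- r | P i) f i <= f c)%N.
Proof.
elim: r => // a r IH; rewrite inE big_cons => /orP[/eqP <- ->|hc Pc].
  exact: geq_minl.
case: (P a); last exact: IH.
by apply: leq_trans (geq_minr _ _) _; apply: IH.
Qed.

Section App.
Variable F : finFieldType.

Lemma min_wt_le m (P : pred 'rV[F]_m) c : P c -> c != 0 -> (min_wt P <= wt c)%N.
Proof.
move=> Pc c0; rewrite /min_wt; apply: bigmin_le; first exact: mem_index_enum.
by rewrite Pc c0.
Qed.

Lemma wt_sum m (z : 'rV[F]_m) : wt z = (\sum_i ((z 0%R i != 0%R) : nat))%N.
Proof.
rewrite /wt -sum1_card big_mkcond /=; apply: eq_bigr => i _.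
by rewrite inE; case: (z 0 i != 0).
Qed.

Lemma wt_row n (x y : 'rV[F]_n) : wt (row_mx x y) = (wt x + wt y)%N.
Proof. by rewrite !wt_sum big_split_ord /=; congr addn; apply: eq_bigr => i _; rewrite ?row_mxEl ?row_mxEr. Qed.

Lemma dot_row n (x y s t : 'rV[F]_n) : dot (row_mx x y) (row_mx s t) = dot x s + dot y t.
Proof. by rewrite /dot big_split_ord /=; congr (_ + _); apply: eq_bigr => i _; rewrite ?row_mxEl ?row_mxEr. Qed.

Lemma wt_opp m (x : 'rV[F]_m) : wt (- x) = wt x.
Proof. by rewrite !wt_sum; apply: eq_bigr => i _; rewrite mxE oppr_eq0. Qed.


Variable n : nat.

Definition f1 : 'Hom('rV[F]_n, 'rV[F]_(n + n)) := linfun (mulmxr (row_mx 1%:M 1%:M)).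
Definition f2 : 'Hom('rV[F]_n, 'rV[F]_(n + n)) := linfun (mulmxr (row_mx 0 1%:M)).

Lemma f1E u : f1 u = row_mx u u.
Proof. by rewrite lfunE /= mul_mx_row mulmx1. Qed.
Lemma f2E u : f2 u = row_mx 0 u.
Proof. by rewrite lfunE /= mul_mx_row mulmx1 mulmx0. Qed.

Definition GG (A B : {vspace 'rV[F]_n}) := (f1 @: A + f2 @: B)%VS.

Lemma memGG (A B : {vspace 'rV[F]_n}) (w : 'rV[F]_(n + n)) :
  reflect (exists u v, [/\ u \in A, v \in B & w = row_mx u (u + v)]) (w \in GG A B).
Proof.
apply: (iffP memv_addP) => [[x /memv_imgP[u hu ->] [y /memv_imgP[v hv ->] ->]]|[u [v [hu hv ->]]]].
  by exists u, v; split => //; rewrite f1E f2E add_row_mx addr0.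
exists (f1 u); first exact: memv_img.
exists (f2 v); first exact: memv_img.
by rewrite f1E f2E add_row_mx addr0.
Qed.

Lemma GG_sub (A B A' B' : {vspace 'rV[F]_n}) : (A <= A')%VS -> (B <= B')%VS -> (GG A B <= GG A' B')%VS.
Proof. by move=> h1 h2; apply: addvS; apply: limgS. Qed.

Lemma dimGG (A B : {vspace 'rV[F]_n}) : \dim (GG A B) = (\dim A + \dim B)%N.
Proof.
have k1 : lker f1 = 0%VS.
  apply/eqP/lker0P => u v; rewrite !f1E => /eq_row_mx[].
  by [].
have k2 : lker f2 = 0%VS.
  apply/eqP/lker0P => u v; rewrite !f2E => /eq_row_mx[].
  by [].
rewrite /GG dimv_disjoint_sum.
  by rewrite !limg_dim_eq // ?k1 ?k2 capv0.
apply/eqP; rewrite -subv0; apply/subvP => w; rewrite memv_cap memv0.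
case/andP => /memv_imgP[u _ ->] /memv_imgP[v _]; rewrite f1E f2E => /eq_row_mx[-> _].
by rewrite row_mx0.
Qed.


Lemma HZ_GG (A B : {vspace 'rV[F]_n}) b : b \in GG A B -> b != 0 ->
  (minn (2 * mindist A) (mindist B) <= wt b)%N.
Proof.
case/memGG => u [v [hu hv ->]] hb; rewrite wt_row.
case: (eqVneq v 0) => [v0|v0].
  rewrite v0 addr0 in hb *.
  have u0 : u != 0 by apply: contraNneq hb => ->; rewrite row_mx0.
  apply: leq_trans (geq_minl _ _) _; rewrite mul2n -addnn leq_add //;
    exact: (min_wt_le (P := fun c => c \in A)).
apply: leq_trans (geq_minr _ _) _.
apply: leq_trans (min_wt_le (P := fun c => c \in B) hv v0) _.
rewrite addnC; apply: leq_trans (wt_sub _ _); by rewrite addrC addKr.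
Qed.

Lemma HX_GG (A B : {vspace 'rV[F]_n}) a : perp (fun x => x \in GG A B) a -> a != 0 ->
  (minn (2 * dual_mindist B) (dual_mindist A) <= wt a)%N.
Proof.
rewrite -(hsubmxK a); set s := lsubmx a; set t := rsubmx a => /perpP hp ha.
have hperp u v : u \in A -> v \in B -> dot s u + dot t (u + v) = 0.
  move=> hu hv; rewrite -dot_row; apply: hp; apply/memGG; by exists u, v.
have ht : dual_code B t.
  apply/forallP => c; apply/implyP => hc; rewrite mx11_eq0 dotE.
  by have := hperp 0 c (mem0v _) hc; rewrite dot0r !add0r => ->.
have hst : dual_code A (s + t).
  apply/forallP => c; apply/implyP => hc; rewrite mx11_eq0 dotE dotDl.
  by have := hperp c 0 hc (mem0v _); rewrite !addr0 => ->.
rewrite wt_row.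
case: (eqVneq (s + t) 0) => [st0|st0].
  have -> : s = - t by apply/eqP; rewrite -addr_eq0 st0.
  have t0 : t != 0.
    apply: contraNneq ha => t0; move: st0; rewrite t0 addr0 => ->; by rewrite row_mx0.
  rewrite wt_opp; apply: leq_trans (geq_minl _ _) _; rewrite mul2n -addnn leq_add //;
    exact: (min_wt_le (P := dual_code B)).
apply: leq_trans (geq_minr _ _) _.
apply: leq_trans (min_wt_le (P := dual_code A) hst st0) _.
by rewrite -(wt_opp t) -{1}(opprK t); apply: wt_sub.
Qed.

End App.


Unset Implicit Arguments.
Local Close Scope ring_scope.

Theorem theorem9 (F : finFieldType) (chi : F -> algC) (n : nat)
    (C1 C2 C3 C4 : {vspace 'rV[F]_n}) :
  nontriv_add_char chi ->
  (C2 <= C1)%VS -> C2 != C1 ->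
  (C4 <= C3)%VS -> C4 != C3 ->
  exists (Q : {vspace qstate F (2 * n)}) (dz dx : nat),
    [/\ (minn (2 * mindist C1) (mindist C3) <= dz)%N,
        (minn (2 * dual_mindist C4) (dual_mindist C2) <= dx)%N &
        is_AQECC chi ((\dim C1 - \dim C2) + (\dim C3 - \dim C4)) dz dx Q].
Proof.
move=> hchi s21 _ s43 _.
rewrite (mul2n n) -(addnn n).
pose G1 := GG C1 C3; pose G2 := GG C2 C4.
have sG : (G2 <= G1)%VS := GG_sub s21 s43.
exists <<sQ chi G1 G2>>%VS, (minn (2 * mindist C1) (mindist C3)),
  (minn (2 * dual_mindist C4) (dual_mindist C2)).
split => //; split.
  rewrite (dim_Q hchi) card_vspace; congr expn.
  have := dimv_cap_compl G1 G2; rewrite (capv_idPr sG) /G1 /G2 !dimGG.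
  have := dimvS s21; have := dimvS s43.
  move=> h1 h2 h3; apply: (@addnI (\dim C2 + \dim C4)); rewrite h3; lia.
have := @css_corrects _ _ hchi _ _ _ sG (minn (2 * mindist C1) (mindist C3)) (minn (2 * dual_mindist C4) (dual_mindist C2)).
apply.
  by move=> b hb b0; apply: HZ_GG.
move=> a ha hn; apply: HX_GG ha _.
apply: contraNneq hn => ->; by have [] := lin_perp (fun x => x \in G1).
Qed.
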